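(* Let $\mathcal{A}\subseteq\mathbb{R}^3$, $K\ge2$, $P_1,\ldots,P_K>0$, $\sigma^2>0$, $h_1,\ldots,h_K\in L^2(\mathcal{A})$ with positive definite Gram matrix $\mathbf{R}$, $r_{k_1,k_2}=\int_{\mathcal{A}}h_{k_1}^{*}h_{k_2}\,\mathrm{d}\mathbf{r}$, $a_k=r_{k,k}$. Fix $k$ and let $\mathbf{h}_{\setminus k}(\mathbf{r})=[h_{k'}(\mathbf{r})]_{k'\neq k}$, $\mathbf{R}_k$ be $\mathbf{R}$ without row/column $k$, $\mathbf{r}_{k,k}=[r_{k',k}]_{k'\neq k}$, $\mathbf{P}_k=\mathrm{diag}(P_{k'}/\sigma^2)_{k'\neq k}$, and $w_{\mathsf{MMSE},k}(\mathbf{r})=h_k(\mathbf{r})-\mathbf{h}_{\setminus k}(\mathbf{r})(\mathbf{P}_k^{-1}+\mathbf{R}_k)^{-1}\mathbf{r}_{k,k}$. Consider the received field $y(\mathbf{r})=\sum_{j=1}^K\sqrt{P_j}h_j(\mathbf{r})s_j+n(\mathbf{r})$ with $s_j\sim\mathcal{CN}(0,1)$ mutually uncorrelated, and $n$ a zero-mean complex Gaussian process uncorrelated with the symbols with $\mathbb{E}\{n(\mathbf{r}_1)n^*(\mathbf{r}_2)\}=\sigma^2\delta(\mathbf{r}_1-\mathbf{r}_2)$; let $\hat y_k=\int_{\mathcal{A}}w_{\mathsf{MMSE},k}^*y\,\mathrm{d}\mathbf{r}$. Then the minimizer $\beta_k^\star$ of $\mathbb{E}\{|\beta\hat{y}_k-s_k|^2\}$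 over $\beta\in\mathbb{C}$ is $$\beta_k^{\star}=\beta_{\mathsf{MMSE},k}=\frac{\sqrt{P_k}}{P_k\big(a_k-\mathbf{r}_{k,k}^{\mathsf{H}}(\mathbf{P}_k^{-1}+\mathbf{R}_k)^{-1}\mathbf{r}_{k,k}\big)+\sigma^2},$$ and the resulting effective beamformer is $$w^{\star}_{\mathsf{MMSE},k}(\mathbf{r})=\beta_{\mathsf{MMSE},k}w_{\mathsf{MMSE},k}(\mathbf{r})=\frac{\sqrt{P_k}\big(h_k(\mathbf{r})-\mathbf{h}_{\setminus k}(\mathbf{r})(\mathbf{P}_k^{-1}+\mathbf{R}_k)^{-1}\mathbf{r}_{k,k}\big)}{P_k\big(a_k-\mathbf{r}_{k,k}^{\mathsf{H}}(\mathbf{P}_k^{-1}+\mathbf{R}_k)^{-1}\mathbf{r}_{k,k}\big)+\sigma^2}.$$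
   Context: Standing assumption: channel responses pairwise non-parallel and $\mathbf{R}$ positive definite. *)

(* Defs.v *)
From mathcomp Require Import all_boot all_order all_algebra.
From mathcomp Require Import all_classical all_reals all_analysis.
From mathcomp.real_closed Require Import complex.
Set Implicit Arguments. Unset Strict Implicit. Unset Printing Implicit Defensive.
Import Order.TTheory GRing.Theory Num.Theory.
Import numFieldNormedType.Exports.
Local Open Scope ring_scope.
Local Open Scope classical_set_scope.

Definition R3 (R : realType) := ((R * R) * R)%type.
Definition leb3 (R : realType) :=
  (((@lebesgue_measure R) \x (@lebesgue_measure R)) \x (@lebesgue_measure R))%E.

Definition sqmod (R : realType) (z : R[i]) : R :=
  complex.Re z ^+ 2 + complex.Im z ^+ 2.

Definition cint (R : realType) (A : set (R3 R)) (f : R3 R -> R[i]) : R[i] :=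
  Complex (Rintegral (@leb3 R) A (fun x => complex.Re (f x)))
          (Rintegral (@leb3 R) A (fun x => complex.Im (f x))).

Definition L2 (R : realType) (A : set (R3 R)) (f : R3 R -> R[i]) : Prop :=
  [/\ measurable_fun A (fun x => complex.Re (f x)),
      measurable_fun A (fun x => complex.Im (f x)) &
      (@leb3 R).-integrable A (fun x => (sqmod (f x))%:E)].

Definition cL2 d (T : measurableType d) (R : realType) (P : probability T R)
  (X : T -> R[i]) : Prop :=
  [/\ measurable_fun setT (fun t => complex.Re (X t)),
      measurable_fun setT (fun t => complex.Im (X t)) &
      P.-integrable setT (fun t => (sqmod (X t))%:E)].

Definition cexpect d (T : measurableType d) (R : realType) (P : probability T R)
  (X : T -> R[i]) : R[i] :=
  Complex (fine ('E_P[fun t => complex.Re (X t)]))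
          (fine ('E_P[fun t => complex.Im (X t)])).

(* the index k' <> k associated with j : 'I_(K-1) (enumeration of k' <> k) *)
Lemma skip_proof (K : nat) (k : 'I_K) (j : 'I_K.-1) : (bump k j < K)%N.
Proof.
case: K k j => [[]//|K] k j /=.
rewrite /bump; have := ltn_ord j; have := ltn_ord k.
case: (k <= j)%N => /=; rewrite ?add1n ?add0n => _ hj //.
exact: (ltn_trans hj).
Qed.
Definition skip (K : nat) (k : 'I_K) (j : 'I_K.-1) : 'I_K :=
  Ordinal (skip_proof k j).

Definition ctr (R : realType) m n (M : 'M[R[i]]_(m, n)) : 'M[R[i]]_(n, m) :=
  (map_mx Num.conj M)^T.

Definition posdef (R : realType) n (M : 'M[R[i]]_n) : Prop :=
  ctr M = M /\ forall x : 'cV[R[i]]_n, x != 0 -> 0 < (ctr x *m M *m x) 0 0.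

Definition gram (R : realType) (A : set (R3 R)) K (h : 'I_K -> R3 R -> R[i])
  : 'M[R[i]]_K :=
  \matrix_(i, j) cint A (fun r => Num.conj (h i r) * h j r).

(* Main.v *)
Require Import Defs.
From mathcomp Require Import all_boot all_order all_algebra.
From mathcomp Require Import all_classical all_reals all_analysis.
From mathcomp.real_closed Require Import complex.
From mathcomp Require Import measurable_realfun.
From mathcomp Require Import ring lra.
Import Order.TTheory GRing.Theory Num.Theory.
Import numFieldNormedType.Exports.
Local Open Scope ring_scope.
Local Open Scope classical_set_scope.
Set Implicit Arguments. Unset Strict Implicit. Unset Printing Implicit Defensive.
Section L2gen.
Context d (T : measurableType d) (R : realType)
  (mu : {measure set T -> \bar R}) (D : set T) (mD : measurable D).

Definition rL2 (f : T -> R) :=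
  measurable_fun D f /\ mu.-integrable D (fun x => (f x ^+ 2)%:E).

Definition rint (f : T -> R) := mu.-integrable D (EFin \o f).

Lemma rint_D f g : rint f -> rint g -> rint (fun x => f x + g x).
Proof.
move=> hf hg; have := integrableD mD hf hg.
by apply: eq_integrable => // x _ /=; rewrite EFinD.
Qed.

Lemma rint_Z c f : rint f -> rint (fun x => c * f x).
Proof.
move=> hf; have := integrableZl mD c hf.
by apply: eq_integrable => // x _ /=; rewrite EFinM.
Qed.

Lemma rint_N f : rint f -> rint (fun x => - f x).
Proof.
move=> hf; have := rint_Z (-1) hf.
by apply: eq_integrable => // x _ /=; rewrite mulN1r.
Qed.

Lemma rint_B f g : rint f -> rint g -> rint (fun x => f x - g x).
Proof. by move=> hf hg; apply: rint_D => //; apply: rint_N. Qed.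

Lemma rint_0 : rint (fun=> 0).
Proof. exact: integrable0. Qed.

Lemma rL2_int_mul f g : rL2 f -> rL2 g -> rint (fun x => f x * g x).
Proof.
move=> [mf if2] [mg ig2].
have hs : rint (fun x => f x ^+ 2 + g x ^+ 2).
  by apply: rint_D.
apply: (le_integrable mD _ _ hs).
  by apply/measurable_EFinP; apply: measurable_funM.
move=> x _ /=; rewrite lee_fin [X in _ <= X]ger0_norm ?addr_ge0 ?sqr_ge0 // ler_norml; apply/andP; split; nra.
Qed.

Lemma rL2_D f g : rL2 f -> rL2 g -> rL2 (fun x => f x + g x).
Proof.
move=> hf hg; have [mf if2] := hf; have [mg ig2] := hg.
split; first by apply: measurable_funD.
have hs : rint (fun x => (f x ^+ 2 + g x ^+ 2) + 2 * (f x * g x)).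
  by apply: rint_D; [apply: rint_D|apply: rint_Z; apply: rL2_int_mul].
by apply: eq_integrable hs => // x _ /=; congr EFin; ring.
Qed.

Lemma rL2_Z c f : rL2 f -> rL2 (fun x => c * f x).
Proof.
move=> [mf if2]; split.
  by apply: measurable_funM => //; apply: measurable_cst.
have := rint_Z (c ^+ 2) if2.
by apply: eq_integrable => // x _ /=; congr EFin; ring.
Qed.

Lemma rL2_N f : rL2 f -> rL2 (fun x => - f x).
Proof.
move=> h; have := rL2_Z (-1) h; case=> m i; split.
  by apply: eq_measurable_fun m => x _; rewrite mulN1r.
by apply: eq_integrable i => // x _; rewrite mulN1r.
Qed.

Lemma rL2_B f g : rL2 f -> rL2 g -> rL2 (fun x => f x - g x).
Proof. by move=> hf hg; apply: rL2_D => //; apply: rL2_N. Qed.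

Lemma rL2_0 : rL2 (fun=> 0).
Proof.
split; first exact: measurable_cst.
rewrite (_ : (fun x => _) = cst 0%E); first exact: integrable0.
by apply/funext => x; rewrite expr0n.
Qed.

End L2gen.
Section Cx.
Context (R : realType).
Implicit Types x y : R[i].
Lemma ReM x y : complex.Re (x * y) = complex.Re x * complex.Re y - complex.Im x * complex.Im y.
Proof. by case: x => a b; case: y => c e. Qed.
Lemma ImM x y : complex.Im (x * y) = complex.Re x * complex.Im y + complex.Im x * complex.Re y.
Proof. by case: x => a b; case: y => c e. Qed.
Lemma ReD x y : complex.Re (x + y) = complex.Re x + complex.Re y.
Proof. by case: x => a b; case: y => c e. Qed.
Lemma ImD x y : complex.Im (x + y) = complex.Im x + complex.Im y.
Proof. by case: x => a b; case: y => c e. Qed.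
Lemma ReN x : complex.Re (- x) = - complex.Re x.
Proof. by case: x => a b. Qed.
Lemma ImN x : complex.Im (- x) = - complex.Im x.
Proof. by case: x => a b. Qed.
Lemma ReB x y : complex.Re (x - y) = complex.Re x - complex.Re y.
Proof. by rewrite ReD ReN. Qed.
Lemma ImB x y : complex.Im (x - y) = complex.Im x - complex.Im y.
Proof. by rewrite ImD ImN. Qed.
Lemma ReJ x : complex.Re (Num.conj x) = complex.Re x.
Proof. by case: x => a b. Qed.
Lemma ImJ x : complex.Im (Num.conj x) = - complex.Im x.
Proof. by case: x => a b. Qed.
Lemma Re0 : complex.Re (0 : R[i]) = 0. Proof. by []. Qed.
Lemma Im0 : complex.Im (0 : R[i]) = 0. Proof. by []. Qed.
Lemma Re1 : complex.Re (1 : R[i]) = 1. Proof. by []. Qed.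
Lemma Im1 : complex.Im (1 : R[i]) = 0. Proof. by []. Qed.
Lemma ReC (c : R) : complex.Re (real_complex R c) = c. Proof. by []. Qed.
Lemma ImC (c : R) : complex.Im (real_complex R c) = 0. Proof. by []. Qed.
Lemma Re_sum I (r : seq I) (P : pred I) (F : I -> R[i]) :
  complex.Re (\sum_(i <- r | P i) F i) = \sum_(i <- r | P i) complex.Re (F i).
Proof.
elim: r => [|i r IH]; first by rewrite !big_nil.
by rewrite !big_cons; case: (P i) => //; rewrite ReD IH.
Qed.
Lemma Im_sum I (r : seq I) (P : pred I) (F : I -> R[i]) :
  complex.Im (\sum_(i <- r | P i) F i) = \sum_(i <- r | P i) complex.Im (F i).
Proof.
elim: r => [|i r IH]; first by rewrite !big_nil.
by rewrite !big_cons; case: (P i) => //; rewrite ImD IH.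
Qed.
Lemma complexP x y : complex.Re x = complex.Re y -> complex.Im x = complex.Im y -> x = y.
Proof. by case: x => a b; case: y => c e /= -> ->. Qed.
Lemma ReJM x : complex.Re (x * Num.conj x) = complex.Re x ^+ 2 + complex.Im x ^+ 2.
Proof. rewrite ReM ReJ ImJ; ring. Qed.
Lemma ImJM x : complex.Im (x * Num.conj x) = 0.
Proof. rewrite ImM ReJ ImJ; ring. Qed.
End Cx.

Section Cgen.
Context d (T : measurableType d) (R : realType)
  (mu : {measure set T -> \bar R}) (D : set T) (mD : measurable D).
Local Notation rL2 := (rL2 mu D).
Local Notation rint := (rint mu D).

Definition cL2g (f : T -> R[i]) :=
  rL2 (fun x => complex.Re (f x)) /\ rL2 (fun x => complex.Im (f x)).
Definition cok (f : T -> R[i]) :=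
  rint (fun x => complex.Re (f x)) /\ rint (fun x => complex.Im (f x)).
Definition cI (f : T -> R[i]) : R[i] :=
  Complex (Rintegral mu D (fun x => complex.Re (f x)))
          (Rintegral mu D (fun x => complex.Im (f x))).

Lemma rL2_eq f g : (forall x, f x = g x) -> rL2 f -> rL2 g.
Proof. by move=> e; have -> : f = g by apply/funext. Qed.
Lemma rint_eq f g : (forall x, f x = g x) -> rint f -> rint g.
Proof. by move=> e; have -> : f = g by apply/funext. Qed.

Lemma cL2g_D f g : cL2g f -> cL2g g -> cL2g (fun x => f x + g x).
Proof.
move=> [f1 f2] [g1 g2]; split.
  by apply: (rL2_eq _ (rL2_D mD f1 g1)) => x; rewrite ReD.
by apply: (rL2_eq _ (rL2_D mD f2 g2)) => x; rewrite ImD.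
Qed.

Lemma cL2g_Z c f : cL2g f -> cL2g (fun x => c * f x).
Proof.
move=> [f1 f2]; split.
  by apply: (rL2_eq _ (rL2_B mD (rL2_Z mD (complex.Re c) f1) (rL2_Z mD (complex.Im c) f2))) => x; rewrite ReM.
by apply: (rL2_eq _ (rL2_D mD (rL2_Z mD (complex.Re c) f2) (rL2_Z mD (complex.Im c) f1))) => x; rewrite ImM.
Qed.

Lemma cL2g_0 : cL2g (fun=> 0).
Proof. by split; apply: (rL2_eq _ (rL2_0 mu D)) => x. Qed.

Lemma cL2g_sum I (r : seq I) (F : I -> T -> R[i]) :
  (forall i, cL2g (F i)) -> cL2g (fun x => \sum_(i <- r) F i x).
Proof.
move=> hF; elim: r => [|i r IH].
  rewrite (_ : (fun x => _) = fun=> 0); first exact: cL2g_0.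
  by apply/funext => x; rewrite big_nil.
rewrite (_ : (fun x => _) = fun x => F i x + \sum_(j <- r) F j x); first exact: cL2g_D.
by apply/funext => x; rewrite big_cons.
Qed.

Lemma cL2g_J f : cL2g f -> cL2g (fun x => Num.conj (f x)).
Proof.
move=> [f1 f2]; split.
  by apply: (rL2_eq _ f1) => x; rewrite ReJ.
by apply: (rL2_eq _ (rL2_N mD f2)) => x; rewrite ImJ.
Qed.

Lemma cok_mulJ f g : cL2g f -> cL2g g -> cok (fun x => f x * Num.conj (g x)).
Proof.
move=> [f1 f2] [g1 g2]; split.
  apply: (rint_eq _ (rint_D mD (rL2_int_mul mD f1 g1) (rL2_int_mul mD f2 g2))) => x.
  by rewrite ReM ReJ ImJ; ring.
apply: (rint_eq _ (rint_B mD (rL2_int_mul mD f2 g1) (rL2_int_mul mD f1 g2))) => x.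
by rewrite ImM ReJ ImJ; ring.
Qed.

Lemma cok_Jmul f g : cL2g f -> cL2g g -> cok (fun x => Num.conj (f x) * g x).
Proof.
move=> hf hg; have [h1 h2] := cok_mulJ hg hf; split.
  by apply: (rint_eq _ h1) => x; rewrite mulrC.
by apply: (rint_eq _ h2) => x; rewrite mulrC.
Qed.

Lemma cI_D f g : cok f -> cok g -> cI (fun x => f x + g x) = cI f + cI g.
Proof.
move=> [? ?] [? ?]; apply: complexP; rewrite /cI ?ReD ?ImD /=.
  by rewrite -RintegralD //; apply: eq_Rintegral => x _; rewrite ReD.
by rewrite -RintegralD //; apply: eq_Rintegral => x _; rewrite ImD.
Qed.

Lemma cok_D f g : cok f -> cok g -> cok (fun x => f x + g x).
Proof.
move=> [f1 f2] [g1 g2]; split.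
  by apply: (rint_eq _ (rint_D mD f1 g1)) => x; rewrite ReD.
by apply: (rint_eq _ (rint_D mD f2 g2)) => x; rewrite ImD.
Qed.

Lemma cok_Z c f : cok f -> cok (fun x => c * f x).
Proof.
move=> [f1 f2]; split.
  by apply: (rint_eq _ (rint_B mD (rint_Z mD (complex.Re c) f1) (rint_Z mD (complex.Im c) f2))) => x; rewrite ReM.
by apply: (rint_eq _ (rint_D mD (rint_Z mD (complex.Re c) f2) (rint_Z mD (complex.Im c) f1))) => x; rewrite ImM.
Qed.

Lemma cI_Z c f : cok f -> cI (fun x => c * f x) = c * cI f.
Proof.
move=> [? ?]; apply: complexP; rewrite /cI ?ReM ?ImM /=.
  rewrite -!RintegralZl // -RintegralB //; try by apply: rint_Z.
  by apply: eq_Rintegral => x _; rewrite ReM.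
rewrite -!RintegralZl // -RintegralD //; try by apply: rint_Z.
by apply: eq_Rintegral => x _; rewrite ImM.
Qed.

Lemma cok_0 : cok (fun=> 0).
Proof. by split; apply: (rint_eq _ (rint_0 mu D)) => x. Qed.

Lemma cI_0 : cI (fun=> 0) = 0.
Proof.
by apply: complexP => /=; rewrite Rintegral_cst // mul0r.
Qed.

Lemma cok_sum I (r : seq I) (F : I -> T -> R[i]) :
  (forall i, cok (F i)) -> cok (fun x => \sum_(i <- r) F i x).
Proof.
move=> hF; elim: r => [|i r IH].
  rewrite (_ : (fun x => _) = fun=> 0); first exact: cok_0.
  by apply/funext => x; rewrite big_nil.
rewrite (_ : (fun x => _) = fun x => F i x + \sum_(j <- r) F j x); first exact: cok_D.
by apply/funext => x; rewrite big_cons.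
Qed.

Lemma cI_sum I (r : seq I) (F : I -> T -> R[i]) :
  (forall i, cok (F i)) -> cI (fun x => \sum_(i <- r) F i x) = \sum_(i <- r) cI (F i).
Proof.
move=> hF; elim: r => [|i r IH].
  have -> : (fun x => \sum_(i <- [::]) F i x) = fun=> 0.
    by apply/funext => x; rewrite big_nil.
  by rewrite cI_0 big_nil.
have -> : (fun x => \sum_(j <- i :: r) F j x) = fun x => F i x + \sum_(j <- r) F j x.
  by apply/funext => x; rewrite big_cons.
by rewrite big_cons -IH -cI_D //; apply: cok_sum.
Qed.

Lemma cI_J f : cok f -> cI (fun x => Num.conj (f x)) = Num.conj (cI f).
Proof.
move=> [? ?]; apply: complexP; rewrite ?ReJ ?ImJ /=.
  by apply: eq_Rintegral => x _; rewrite ReJ.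
rewrite -mulN1r -RintegralZl //.
by apply: eq_Rintegral => x _; rewrite ImJ mulN1r.
Qed.

Lemma cok_J f : cok f -> cok (fun x => Num.conj (f x)).
Proof.
move=> [f1 f2]; split; first by apply: (rint_eq _ f1) => x; rewrite ReJ.
by apply: (rint_eq _ (rint_N mD f2)) => x; rewrite ImJ.
Qed.

End Cgen.
Section Bridge.
Context d (T : measurableType d) (R : realType)
  (mu : {measure set T -> \bar R}) (D : set T) (mD : measurable D).

Lemma cL2gP (f : T -> R[i]) :
  [/\ measurable_fun D (fun x => complex.Re (f x)),
      measurable_fun D (fun x => complex.Im (f x)) &
      mu.-integrable D (fun x => (sqmod (f x))%:E)] <-> cL2g mu D f.
Proof.
split.
  move=> [m1 m2 i]; split; split => //.
    apply: (le_integrable mD _ _ i).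
      by apply/measurable_EFinP; apply: measurable_funX.
    move=> x _ /=; rewrite lee_fin /sqmod.
    rewrite !ger0_norm ?addr_ge0 ?sqr_ge0 //.
    by have := sqr_ge0 (complex.Im (f x)); have := sqr_ge0 (complex.Re (f x)); lra.
  apply: (le_integrable mD _ _ i).
    by apply/measurable_EFinP; apply: measurable_funX.
  move=> x _ /=; rewrite lee_fin /sqmod.
  rewrite !ger0_norm ?addr_ge0 ?sqr_ge0 //.
    by have := sqr_ge0 (complex.Im (f x)); have := sqr_ge0 (complex.Re (f x)); lra.
move=> [[m1 i1] [m2 i2]]; split => //.
have := rint_D mD i1 i2.
by apply: rint_eq.
Qed.
End Bridge.

Section Cov.
Context d (T : measurableType d) (R : realType) (P : probability T R).
Local Notation L := (cL2g P setT).

Definition cov (X Z : T -> R[i]) := cI P setT (fun t => X t * Num.conj (Z t)).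

Lemma cexpectE X : cexpect P X = cI P setT X.
Proof. by rewrite /cexpect /cI !unlock. Qed.

Lemma cL2E X : cL2 P X <-> L X.
Proof. exact: cL2gP. Qed.

Lemma cov_Dl X Y Z : L X -> L Y -> L Z ->
  cov (fun t => X t + Y t) Z = cov X Z + cov Y Z.
Proof.
move=> hX hY hZ; rewrite /cov -(cI_D measurableT); try exact: (cok_mulJ measurableT).
by congr cI; apply/funext => t; rewrite mulrDl.
Qed.

Lemma cov_Zl c X Z : L X -> L Z -> cov (fun t => c * X t) Z = c * cov X Z.
Proof.
move=> hX hZ; rewrite /cov -(cI_Z measurableT); last exact: (cok_mulJ measurableT).
by congr cI; apply/funext => t; rewrite mulrA.
Qed.

Lemma cov_J X Z : L X -> L Z -> cov Z X = Num.conj (cov X Z).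
Proof.
move=> hX hZ; rewrite /cov -(cI_J measurableT); last exact: (cok_mulJ measurableT).
by congr cI; apply/funext => t; rewrite rmorphM /= conjCK mulrC.
Qed.

Lemma cov_Dr X Y Z : L X -> L Y -> L Z ->
  cov Z (fun t => X t + Y t) = cov Z X + cov Z Y.
Proof.
move=> hX hY hZ.
rewrite cov_J //; last exact: (cL2g_D measurableT).
by rewrite cov_Dl // rmorphD /= -!cov_J.
Qed.

Lemma cov_Zr c X Z : L X -> L Z -> cov Z (fun t => c * X t) = Num.conj c * cov Z X.
Proof.
move=> hX hZ; rewrite cov_J //; last exact: (cL2g_Z measurableT).
by rewrite cov_Zl // rmorphM /= -cov_J.
Qed.

Lemma cov_suml I (r : seq I) (b : I -> R[i]) (X : I -> T -> R[i]) Z :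
  (forall i, L (X i)) -> L Z ->
  cov (fun t => \sum_(i <- r) b i * X i t) Z = \sum_(i <- r) b i * cov (X i) Z.
Proof.
move=> hX hZ; rewrite /cov.
have -> : (fun t => (\sum_(i <- r) b i * X i t) * Num.conj (Z t)) =
  (fun t => \sum_(i <- r) b i * (X i t * Num.conj (Z t))).
  by apply/funext => t; rewrite mulr_suml; apply: eq_bigr => i _; rewrite mulrA.
rewrite (cI_sum measurableT); last by move=> i; apply: (cok_Z measurableT); apply: (cok_mulJ measurableT).
by apply: eq_bigr => i _; rewrite (cI_Z measurableT) //; apply: (cok_mulJ measurableT).
Qed.

Lemma cL2g_lin I (r : seq I) (b : I -> R[i]) (X : I -> T -> R[i]) :
  (forall i, L (X i)) -> L (fun t => \sum_(i <- r) b i * X i t).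
Proof.
move=> hX; apply: (@cL2g_sum _ _ _ _ _ measurableT _ r (fun i t => b i * X i t)) => i.
exact: (cL2g_Z measurableT).
Qed.

Lemma cov_sumr I (r : seq I) (b : I -> R[i]) (X : I -> T -> R[i]) Z :
  (forall i, L (X i)) -> L Z ->
  cov Z (fun t => \sum_(i <- r) b i * X i t) =
  \sum_(i <- r) Num.conj (b i) * cov Z (X i).
Proof.
move=> hX hZ; rewrite cov_J //; last exact: cL2g_lin.
rewrite cov_suml // rmorph_sum /=; apply: eq_bigr => i _.
by rewrite rmorphM /= -cov_J.
Qed.

Lemma expect_sqmod X : L X ->
  expectation P (fun t => sqmod (X t)) = (complex.Re (cov X X))%:E.
Proof.
move=> hX; have [_ _ hi] := (iffRL (cL2gP _ measurableT X) hX).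
rewrite unlock /cov /cI /= /Rintegral.
have -> : (fun x => (complex.Re (X x * Num.conj (X x)))%:E) =
  (fun x => (sqmod (X x))%:E) by apply/funext => x; rewrite ReJM.
by rewrite fineK //; apply: integrable_fin_num.
Qed.

End Cov.
Section Mx.
Context (R : realType).
Local Notation C := (R[i]).

Lemma sum_delta_l (I : finType) (a : I) (F : I -> C) :
  \sum_i (i == a)%:R * F i = F a.
Proof.
rewrite (bigD1 a) //= eqxx mul1r big1 ?addr0 // => i /negbTE ->.
by rewrite mul0r.
Qed.

Lemma sum_delta_r (I : finType) (a : I) (F : I -> C) :
  \sum_i F i * (i == a)%:R = F a.
Proof. by rewrite -[RHS]sum_delta_l; apply: eq_bigr => i _; rewrite mulrC. Qed.

Lemma ctrE m n (A : 'M[C]_(m, n)) i j : ctr A i j = Num.conj (A j i).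
Proof. by rewrite /ctr !mxE. Qed.

Lemma ctr_mul m n p (A : 'M[C]_(m, n)) (B : 'M[C]_(n, p)) :
  ctr (A *m B) = ctr B *m ctr A.
Proof. by rewrite /ctr map_mxM trmx_mul. Qed.

Lemma ctrD m n (A B : 'M[C]_(m, n)) : ctr (A + B) = ctr A + ctr B.
Proof. by rewrite /ctr map_mxD linearD. Qed.

Lemma ctrN m n (A : 'M[C]_(m, n)) : ctr (- A) = - ctr A.
Proof. by rewrite /ctr map_mxN linearN. Qed.

Lemma ctrB m n (A B : 'M[C]_(m, n)) : ctr (A - B) = ctr A - ctr B.
Proof. by rewrite ctrD ctrN. Qed.

Lemma ctrK m n (A : 'M[C]_(m, n)) : ctr (ctr A) = A.
Proof. by apply/matrixP => i j; rewrite !ctrE conjCK. Qed.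

Lemma ctr_real m n (A : 'M[C]_(m, n)) :
  (forall i j, Num.conj (A i j) = A i j) -> ctr A = A^T.
Proof. by move=> h; apply/matrixP => i j; rewrite ctrE mxE h. Qed.

Lemma conj_nat (b : bool) : Num.conj (b%:R : C) = b%:R.
Proof. by case: b; rewrite ?rmorph1 ?rmorph0. Qed.

Lemma conj_realC (r : R) : Num.conj (real_complex R r) = real_complex R r.
Proof. by apply: complexP; rewrite ?ReJ ?ImJ /= ?oppr0. Qed.

Lemma sqmodE (c : C) : sqmod c = complex.Re (c * Num.conj c).
Proof. by rewrite ReJM. Qed.

Lemma sqmod_ge0 (c : C) : 0 <= sqmod c.
Proof. by rewrite /sqmod addr_ge0 ?sqr_ge0. Qed.

Lemma sqmod_gt0 (c : C) : c != 0 -> 0 < sqmod c.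
Proof.
move=> hc; rewrite lt_def sqmod_ge0 andbT; apply: contra hc => /eqP h.
have h1 := sqr_ge0 (complex.Re c); have h2 := sqr_ge0 (complex.Im c).
rewrite /sqmod in h.
have e1 : complex.Re c ^+ 2 = 0 by lra.
have e2 : complex.Im c ^+ 2 = 0 by lra.
move: e1 e2 => /eqP; rewrite sqrf_eq0 => /eqP e1 /eqP; rewrite sqrf_eq0 => /eqP e2.
by apply/eqP; apply: complexP.
Qed.

Lemma diag_form n (dd : 'I_n -> R) (u : 'cV[C]_n) :
  (ctr u *m diag_mx (\row_l real_complex R (dd l)) *m u) 0 0 =
  real_complex R (\sum_l dd l * sqmod (u l 0)).
Proof.
rewrite mul_mx_diag !mxE.
apply: complexP; rewrite ?Re_sum ?Im_sum /=.
  apply: eq_bigr => l _; rewrite !mxE ?ctrE !(ReM, ImM, ReJ, ImJ, ReC, ImC) /sqmod; ring.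
rewrite big1 // => l _; rewrite !mxE ?ctrE !(ReM, ImM, ReJ, ImJ, ReC, ImC); ring.
Qed.

Lemma cmx_neq0 n (u : 'cV[C]_n) : u != 0 -> exists l, u l 0 != 0.
Proof.
move=> hu; apply/existsP; apply: contraR hu; rewrite negb_exists => /forallP h.
apply/eqP/matrixP => i j; rewrite (ord1 j) mxE; exact/eqP/negbNE/h.
Qed.

Lemma diag_form_gt0 n (dd : 'I_n -> R) (u : 'cV[C]_n) :
  (forall l, 0 < dd l) -> u != 0 -> 0 < \sum_l dd l * sqmod (u l 0).
Proof.
move=> hd /cmx_neq0 [l hl]; rewrite (bigD1 l) //=.
apply: ltr_wpDr; first by apply: sumr_ge0 => i _; rewrite mulr_ge0 ?sqmod_ge0 // ltW.
by rewrite mulr_gt0 // sqmod_gt0.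
Qed.

Lemma ge0C (c : C) : 0 <= c -> complex.Im c = 0 /\ 0 <= complex.Re c.
Proof. by case: c => a b; rewrite lecE /= => /andP[/eqP <-]. Qed.
Lemma gt0C (c : C) : 0 < c -> complex.Im c = 0 /\ 0 < complex.Re c.
Proof. by case: c => a b; rewrite ltcE /= => /andP[/eqP <-]. Qed.

Lemma posdef_ge0 n (Q : 'M[C]_n) (x : 'cV[C]_n) :
  posdef Q -> 0 <= (ctr x *m Q *m x) 0 0.
Proof.
move=> [_ hQ]; have [->|hx] := eqVneq x 0; last exact/ltW/hQ.
by rewrite mulmx0 mxE.
Qed.

Lemma not_unit_ker n (Q : 'M[C]_n) :
  Q \notin unitmx -> exists2 z : 'rV[C]_n, z != 0 & z *m Q = 0.
Proof.
rewrite -row_free_unit -kermx_eq0 => hk.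
have [i hi] : exists i, row i (kermx Q) != 0.
  apply/existsP; apply: contraR hk; rewrite negb_exists => /forallP h.
  apply/eqP/row_matrixP => i; rewrite row0; exact/eqP/negbNE/h.
by exists (row i (kermx Q)) => //; rewrite -row_mul mulmx_ker row0.
Qed.

Lemma sqmodM (y z : C) : sqmod (y * z) = sqmod y * sqmod z.
Proof. rewrite /sqmod ReM ImM; ring. Qed.
Lemma sqmodJ (y : C) : sqmod (Num.conj y) = sqmod y.
Proof. rewrite /sqmod ReJ ImJ; ring. Qed.
Lemma sqmodC (r : R) : sqmod (real_complex R r) = r ^+ 2.
Proof. rewrite /sqmod ReC ImC; ring. Qed.

Lemma quadE (beta : C) (V u : R) :
  complex.Re (beta * (Num.conj beta * real_complex R V + Num.conj (-1) * real_complex R u)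
   + (-1) * (Num.conj beta * Num.conj (real_complex R u) + Num.conj (-1) * 1))
  = (complex.Re beta ^+ 2 + complex.Im beta ^+ 2) * V - 2 * complex.Re beta * u + 1.
Proof.
rewrite !rmorphN1 !mulN1r ?mulr1.
rewrite !(ReD, ImD, ReM, ImM, ReN, ImN, ReJ, ImJ).
rewrite !(ReC, ImC, Re1, Im1).
ring.
Qed.

Lemma quad_min (V u : R) (f : C -> \bar R) : 0 < V ->
  (forall beta, f beta = ((complex.Re beta ^+ 2 + complex.Im beta ^+ 2) * V
                          - 2 * complex.Re beta * u + 1)%:E) ->
  forall beta, (forall beta', (f beta <= f beta')%E) <-> beta = real_complex R (u / V).
Proof.
move=> hV hf beta; set p0 := u / V.
have hu : u = p0 * V by rewrite /p0 divfK // gt_eqF.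
split.
  move=> hmin; have := hmin (real_complex R p0); rewrite !hf lee_fin ReC; rewrite ImC hu.
  set p := complex.Re beta; set q := complex.Im beta => hle.
  have h1 : V * ((p - p0) ^+ 2 + q ^+ 2) <= 0.
    have e : V * ((p - p0) ^+ 2 + q ^+ 2) =
      ((p ^+ 2 + q ^+ 2) * V - 2 * p * (p0 * V) + 1) -
      ((p0 ^+ 2 + 0 ^+ 2) * V - 2 * p0 * (p0 * V) + 1) by ring.
    rewrite e; lra.
  have h2 : (p - p0) ^+ 2 + q ^+ 2 <= 0.
    by rewrite -(pmulr_rle0 _ hV).
  have hp := sqr_ge0 (p - p0); have hq := sqr_ge0 q.
  have e1 : (p - p0) ^+ 2 = 0 by lra.
  have e2 : q ^+ 2 = 0 by lra.
  move: e1 e2 => /eqP; rewrite sqrf_eq0 subr_eq0 => /eqP e1 /eqP; rewrite sqrf_eq0 => /eqP e2.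
  by apply: complexP; rewrite ?ReC ?ImC.
move=> -> beta'; rewrite !hf lee_fin ReC; rewrite ImC hu.
set p := complex.Re beta'; set q := complex.Im beta'.
have h0 : 0 <= V * ((p - p0) ^+ 2 + q ^+ 2).
  by rewrite mulr_ge0 ?addr_ge0 ?sqr_ge0 // ltW.
have e : V * ((p - p0) ^+ 2 + q ^+ 2) =
      ((p ^+ 2 + q ^+ 2) * V - 2 * p * (p0 * V) + 1) -
      ((p0 ^+ 2 + 0 ^+ 2) * V - 2 * p0 * (p0 * V) + 1) by ring.
rewrite e in h0; lra.
Qed.

End Mx.

Unset Implicit Arguments.
Set Strict Implicit.
Set Printing Implicit Defensive.

Theorem lemma11 (R : realType) (d : measure_display) (T : measurableType d)
  (P : probability T R)
  (A : set (R3 R)) (hA : measurable A)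
  (K : nat) (hK : (2 <= K)%N)
  (Pw : 'I_K -> R) (hPw : forall j, 0 < Pw j)
  (sigma2 : R) (hsigma2 : 0 < sigma2)
  (h : 'I_K -> R3 R -> R[i]) (hL2 : forall j, L2 A (h j))
  (hR : posdef (gram A h))
  (* symbols s_j : zero mean, unit variance, mutually uncorrelated *)
  (s : 'I_K -> T -> R[i])
  (hs_L2 : forall j, cL2 P (s j))
  (hs_mean : forall j, cexpect P (s j) = 0)
  (hs_cov : forall i j,
     cexpect P (fun t => s i t * Num.conj (s j t)) = (i == j)%:R)
  (* noise: N f = int_A f^* n dr, for f in L^2(A) *)
  (N : (R3 R -> R[i]) -> T -> R[i])
  (hN_L2 : forall f, L2 A f -> cL2 P (N f))
  (hN_mean : forall f, L2 A f -> cexpect P (N f) = 0)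
  (hN_cov : forall f g, L2 A f -> L2 A g ->
     cexpect P (fun t => N f t * Num.conj (N g t))
     = real_complex R sigma2 * cint A (fun r => Num.conj (f r) * g r))
  (hN_s : forall f j, L2 A f ->
     cexpect P (fun t => N f t * Num.conj (s j t)) = 0)
  (k : 'I_K) :
  let Rm := gram A h in
  let a := Rm k k in
  let Rk : 'M[R[i]]_(K.-1) := \matrix_(i, j) Rm (skip k i) (skip k j) in
  let rkk : 'cV[R[i]]_(K.-1) := \col_i Rm (skip k i) k in
  let Pk : 'M[R[i]]_(K.-1) :=
    diag_mx (\row_i real_complex R (Pw (skip k i) / sigma2)) in
  let M := invmx (invmx Pk + Rk) in
  let hvec (r : R3 R) : 'rV[R[i]]_(K.-1) := \row_i h (skip k i) r in
  let w (r : R3 R) := h k r - (hvec r *m M *m rkk) 0 0 in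
  let yhat (t : T) :=
    cint A (fun r => Num.conj (w r) *
      (\sum_j real_complex R (Num.sqrt (Pw j)) * h j r * s j t)) + N w t in
  let mse (beta : R[i]) : \bar R :=
    expectation P (fun t => sqmod (beta * yhat t - s k t)) in
  let beta_star := real_complex R (Num.sqrt (Pw k)) /
      (real_complex R (Pw k) * (a - (ctr rkk *m M *m rkk) 0 0)
       + real_complex R sigma2) in
  (forall beta : R[i], (forall beta', (mse beta <= mse beta')%E) <-> beta = beta_star)
  /\ (forall r, beta_star * w r =
       real_complex R (Num.sqrt (Pw k)) * (h k r - (hvec r *m M *m rkk) 0 0) /
       (real_complex R (Pw k) * (a - (ctr rkk *m M *m rkk) 0 0)
        + real_complex R sigma2)).
Proof.
destruct K as [|n]; first by [].
move=> Rm a Rk rkk Pk M hvec w yhat mse beta_star.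
split; last by move=> r; rewrite /beta_star mulrAC.
have skipE : forall l : 'I_n, skip k l = lift k l by move=> l; apply: val_inj.
set E : 'M[R[i]]_(n.+1, n) := \matrix_(i, l) ((i == lift k l)%:R).
have mulE : forall p (B : 'M[R[i]]_(p, n.+1)), B *m E = \matrix_(i, l) B i (lift k l).
  move=> p B; apply/matrixP => i l; rewrite !mxE.
  by rewrite -[RHS](sum_delta_r (lift k l) (fun j => B i j)); apply: eq_bigr => j _; rewrite mxE.
have trEmul : forall p (B : 'M[R[i]]_(n.+1, p)), E^T *m B = \matrix_(l, j) B (lift k l) j.
  move=> p B; apply/matrixP => l j; rewrite !mxE.
  by rewrite -[RHS](sum_delta_l (lift k l) (fun i => B i j)); apply: eq_bigr => i _; rewrite !mxE.
have ctrE_ : ctr E = E^T by apply: ctr_real => i j; rewrite mxE conj_nat.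
have ctrEt : ctr E^T = E by rewrite -ctrE_ ctrK.
have hherm : ctr Rm = Rm by case: hR.
have hRk : Rk = E^T *m Rm *m E.
  by apply/matrixP => l m; rewrite mulE trEmul !mxE !skipE.
have hrkk : rkk = E^T *m Rm *m delta_mx k 0.
  by apply/matrixP => l j; rewrite (ord1 j) -colE trEmul !mxE skipE.
have ctrRk : ctr Rk = Rk.
  by rewrite hRk !ctr_mul ctrEt hherm ctrE_ mulmxA.
set Dg : 'M[R[i]]_n := diag_mx (\row_l real_complex R (sigma2 / Pw (lift k l))).
have ctrDg : ctr Dg = Dg.
  apply/matrixP => i j; rewrite ctrE !mxE.
  have [->|hij] := eqVneq i j; first by rewrite !mulr1n conj_realC.
  by rewrite !mulr0n rmorph0.
have divK : forall u : R, 0 < u -> u / sigma2 * (sigma2 / u) = 1.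
  by move=> u hu; rewrite mulrA divfK ?divff // gt_eqF.
have PD : Pk *m Dg = 1%:M.
  rewrite mulmx_diag; apply/matrixP => i j; rewrite !mxE skipE -rmorphM /=.
  by rewrite divK.
have invPk : invmx Pk = Dg.
  have [Pu _] := mulmx1_unit PD.
  by rewrite -[RHS]mul1mx -(mulVmx Pu) -mulmxA PD mulmx1.
have hdg : forall l, 0 < sigma2 / Pw (lift k l).
  by move=> l; rewrite divr_gt0.
have ctr0 : forall p q, ctr (0 : 'M[R[i]]_(p, q)) = 0.
  by move=> p q; apply/matrixP => i j; rewrite ctrE !mxE rmorph0.
have Qunit : (invmx Pk + Rk) \in unitmx.
  rewrite invPk; have [//|hnu] := boolP ((Dg + Rk) \in unitmx).
  exfalso; have [z hz hzQ] := not_unit_ker hnu.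
  set y := ctr z.
  have hy : y != 0.
    by apply: contra hz => /eqP hy0; rewrite -[z]ctrK -/y hy0 ctr0.
  have e0 : (ctr y *m Dg *m y) 0 0 + (ctr y *m Rk *m y) 0 0 = 0.
    have e1 : (ctr y *m (Dg + Rk) *m y) 0 0 = 0.
      by rewrite /y ctrK hzQ mul0mx mxE.
    by rewrite -e1 mulmxDr mulmxDl [in RHS]mxE.
  have eR : ctr y *m Rk *m y = ctr (E *m y) *m Rm *m (E *m y).
    by rewrite hRk ctr_mul ctrE_ !mulmxA.
  have [_ hR0] := ge0C (posdef_ge0 (E *m y) hR).
  have := diag_form_gt0 hdg hy.
  move/(congr1 (@complex.Re R)): e0; rewrite diag_form eR ReD ReC Re0 -/Rm.
  lra.
set v := M *m rkk.
have Qv : Dg *m v + Rk *m v = rkk.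
  by rewrite -mulmxDl -invPk /v /M mulKVmx.
set x : 'cV[R[i]]_n.+1 := delta_mx k 0 - E *m v.
have xk : x k 0 = 1.
  rewrite !mxE eqxx /= big1 ?subr0 // => l _.
  by rewrite !mxE (negbTE (neq_lift k l)) mul0r.
have hx : x != 0.
  by apply/eqP => h0; move: xk; rewrite h0 mxE => /eqP; rewrite eq_sym oner_eq0.
have wE : forall r, w r = \sum_i x i 0 * h i r.
  move=> r; have hvecE : hvec r = (\row_i h i r) *m E.
    by rewrite mulE; apply/matrixP => i l; rewrite !mxE skipE.
  rewrite /w hvecE -mulmxA -/v -mulmxA [in LHS]mxE.
  under eq_bigr do rewrite !mxE.
  under [RHS]eq_bigr do rewrite !mxE mulrBl.
  rewrite sumrB; congr (_ - _).
    by rewrite -[LHS](sum_delta_l k (h ^~ r)); apply: eq_bigr => i _; rewrite andbT.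
  by apply: eq_bigr => i _; rewrite mulrC.
have hL2g : forall j, cL2g (@leb3 R) A (h j).
  by move=> j; apply/(cL2gP (@leb3 R) hA (h j)); exact: hL2.
have hwL2g : cL2g (@leb3 R) A w.
  rewrite (_ : w = fun r => \sum_i x i 0 * h i r); last by apply/funext => r; rewrite wE.
  by apply: (@cL2g_sum _ _ _ (@leb3 R) _ hA _ _ (fun i r => x i 0 * h i r)) => i; apply: cL2g_Z.
have hwL2 : L2 A w by apply/(cL2gP (@leb3 R) hA w).
have cintE : forall f, cint A f = cI (@leb3 R) A f by [].
have cokZ := @cok_Z _ _ _ (@leb3 R) _ hA.
have cokJmul := @cok_Jmul _ _ _ (@leb3 R) _ hA.
have cIZ := @cI_Z _ _ _ (@leb3 R) _ hA.
have cIsum := @cI_sum _ _ _ (@leb3 R) _ hA.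
set c := fun j => cint A (fun r => Num.conj (w r) * h j r).
have cE : forall j, c j = (ctr x *m Rm) 0 j.
  move=> j; rewrite /c cintE.
  have -> : (fun r => Num.conj (w r) * h j r) =
      (fun r => \sum_i Num.conj (x i 0) * (Num.conj (h i r) * h j r)).
    apply/funext => r; rewrite wE rmorph_sum mulr_suml; apply: eq_bigr => i _.
    by rewrite rmorphM /= mulrA.
  rewrite cIsum; last first.
    by move=> i; apply: cokZ; apply: cokJmul.
  rewrite mxE; apply: eq_bigr => i _; rewrite cIZ; last exact: cokJmul.
  by rewrite ctrE; congr (_ * _); rewrite /Rm /gram mxE.
have GE : cint A (fun r => Num.conj (w r) * w r) = (ctr x *m Rm *m x) 0 0.
  rewrite cintE.
  have -> : (fun r => Num.conj (w r) * w r) =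
      (fun r => \sum_i x i 0 * (Num.conj (w r) * h i r)).
    apply/funext => r; rewrite {2}wE mulr_sumr; apply: eq_bigr => i _.
    by rewrite mulrCA.
  rewrite cIsum; last first.
    by move=> i; apply: cokZ; apply: cokJmul.
  rewrite mxE; apply: eq_bigr => i _; rewrite cIZ; last exact: cokJmul.
  by rewrite -cintE -/(c i) cE mulrC.
set D := a - (ctr rkk *m M *m rkk) 0 0.
have eRv : Rk *m v = rkk - Dg *m v by apply/eqP; rewrite eq_sym subr_eq -Qv addrC.
have e1 : ctr (delta_mx k 0) *m Rm *m E = ctr rkk.
  by rewrite hrkk !ctr_mul ctrEt hherm mulmxA.
have xRE : ctr x *m Rm *m E = ctr v *m Dg.
  rewrite /x ctrB ctr_mul ctrE_ !mulmxBl e1.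
  rewrite (_ : ctr v *m E^T *m Rm *m E = ctr (Rk *m v)); last first.
    by rewrite ctr_mul ctrRk hRk !mulmxA.
  by rewrite eRv ctrB opprB addrC subrK ctr_mul ctrDg.
have R1 : forall l, c (lift k l) = Num.conj (v l 0) * real_complex R (sigma2 / Pw (lift k l)).
  move=> l; rewrite cE.
  have -> : (ctr x *m Rm) 0 (lift k l) = (ctr x *m Rm *m E) 0 l by rewrite mulE [in RHS]mxE.
  by rewrite xRE mul_mx_diag mxE ctrE [X in _ * X]mxE.
have ctrd : ctr (delta_mx k 0 : 'cV[R[i]]_n.+1) = delta_mx 0 k.
  by rewrite ctr_real ?trmx_delta // => i j; rewrite mxE conj_nat.
have xRd : ctr x *m Rm *m delta_mx k 0 = delta_mx 0 k *m Rm *m delta_mx k 0 - ctr v *m rkk.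
  by rewrite /x ctrB ctr_mul ctrE_ ctrd !mulmxBl hrkk !mulmxA.
have ckE : c k = (ctr x *m Rm *m (delta_mx k 0 : 'cV[R[i]]_n.+1)) 0 0 by rewrite cE -colE [in RHS]mxE.
have aE : ((delta_mx 0 k : 'rV[R[i]]_n.+1) *m Rm *m (delta_mx k 0 : 'cV[R[i]]_n.+1)) 0 0 = a.
  by rewrite -rowE -colE mxE [LHS]mxE.
have conja : Num.conj a = a by rewrite /a -[in RHS]hherm ctrE.
have R2 : c k = Num.conj D.
  rewrite ckE xRd [LHS]mxE aE /D rmorphB /= conja -mulmxA -/v.
  by rewrite [X in _ + X]mxE; congr (_ - _); rewrite -ctrE ctr_mul ctrK.
have R3 : (ctr x *m Rm *m x) 0 0 = c k - (ctr v *m Dg *m v) 0 0.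
  have -> : ctr x *m Rm *m x = ctr x *m Rm *m (delta_mx k 0 - E *m v) by [].
  by rewrite mulmxBr [LHS]mxE ckE mulmxA xRE [X in _ + X]mxE.
set G := (ctr x *m Rm *m x) 0 0.
have [ImG ReG] : complex.Im G = 0 /\ 0 < complex.Re G := gt0C (proj2 hR x hx).
set Sv := \sum_l (sigma2 / Pw (lift k l)) * sqmod (v l 0).
have SE : (ctr v *m Dg *m v) 0 0 = real_complex R Sv by rewrite diag_form.
have Sge0 : 0 <= Sv.
  by apply: sumr_ge0 => l _; rewrite mulr_ge0 ?sqmod_ge0 // ltW.
have hD : Num.conj D = G + real_complex R Sv by rewrite -R2 /G R3 SE subrK.
have ImD0 : complex.Im D = 0.
  have e0 : complex.Im (G + real_complex R Sv) = 0 by rewrite ImD ImG ImC addr0.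
  have := congr1 (@complex.Im R) hD; rewrite ImJ e0 => e; lra.
set dd := complex.Re D.
have ReDd : dd = complex.Re G + Sv.
  have e0 : complex.Re (G + real_complex R Sv) = complex.Re G + Sv by rewrite ReD ReC.
  by have := congr1 (@complex.Re R) hD; rewrite ReJ e0.
have Dreal : D = real_complex R dd by apply: complexP.
have ddpos : 0 < dd by lra.
have sqP : forall j, Num.sqrt (Pw j) ^+ 2 = Pw j.
  by move=> j; rewrite sqr_sqrtr // ltW.
set b := fun j => real_complex R (Num.sqrt (Pw j)) * c j.
have Vsum : \sum_j sqmod (b j) + sigma2 * complex.Re G = dd * (Pw k * dd + sigma2).
  rewrite (bigD1_ord k) //= /b sqmodM sqmodC sqP R2 sqmodJ Dreal sqmodC.
  under eq_bigr do rewrite sqmodM sqmodC sqP R1 sqmodM sqmodJ sqmodC.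
  have -> : complex.Re G = dd - Sv by rewrite ReDd; ring.
  rewrite /Sv mulrBr mulr_sumr.
  rewrite (_ : \sum_(i < n) _ = \sum_(i < n) sigma2 * (sigma2 / Pw (lift k i) * sqmod (v i 0))).
    ring.
  apply: eq_bigr => l _; have := hPw (lift k l) => hp.
  field; exact: lt0r_neq0.
have hsL : forall j, cL2g P setT (s j) by move=> j; apply/cL2E; exact: hs_L2.
have hNL : cL2g P setT (N w) by apply/cL2E; exact: hN_L2.
have covss : forall i j, cov P (s i) (s j) = (i == j)%:R.
  by move=> i j; rewrite /cov -cexpectE hs_cov.
have covNs : forall j, cov P (N w) (s j) = 0.
  by move=> j; rewrite /cov -cexpectE hN_s.
have covsN : forall j, cov P (s j) (N w) = 0.
  by move=> j; rewrite cov_J // covNs rmorph0.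
have covNN : cov P (N w) (N w) = real_complex R sigma2 * G.
  by rewrite /cov -cexpectE hN_cov // GE.
set Ss := fun t => \sum_j b j * s j t.
have hSL : cL2g P setT Ss by apply: cL2g_lin.
have hY : yhat = fun t => Ss t + N w t.
  apply/funext => t; rewrite /yhat; congr (_ + _).
  have -> : (fun r => Num.conj (w r) *
      \sum_j real_complex R (Num.sqrt (Pw j)) * h j r * s j t) =
      fun r => \sum_j (real_complex R (Num.sqrt (Pw j)) * s j t) * (Num.conj (w r) * h j r).
    apply/funext => r; rewrite mulr_sumr; apply: eq_bigr => j _.
    ring.
  rewrite cintE cIsum; last by move=> j; apply: cokZ; apply: cokJmul.
  apply: eq_bigr => j _; rewrite cIZ; last exact: cokJmul.
  by rewrite -cintE -/(c j) /b mulrAC.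
have covSs : forall j, cov P Ss (s j) = b j.
  move=> j; rewrite /Ss cov_suml //.
  by under eq_bigr do rewrite covss; rewrite sum_delta_r.
have covsS : forall j, cov P (s j) Ss = Num.conj (b j).
  by move=> j; rewrite cov_J // covSs.
have covSN : cov P Ss (N w) = 0.
  by rewrite /Ss cov_suml // big1 // => j _; rewrite covsN mulr0.
have covNS : cov P (N w) Ss = 0 by rewrite cov_J // covSN rmorph0.
have covSS : cov P Ss Ss = \sum_j b j * Num.conj (b j).
  by rewrite {1}/Ss cov_suml //; apply: eq_bigr => j _; rewrite covsS.
set Yf := fun t => Ss t + N w t.
have hYL : cL2g P setT Yf by apply: cL2g_D.
have covYY : cov P Yf Yf = \sum_j b j * Num.conj (b j) + real_complex R sigma2 * G.
  rewrite /Yf cov_Dl // !cov_Dr // covSS covSN covNS covNN; ring.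
have covYs : cov P Yf (s k) = b k by rewrite /Yf cov_Dl // covSs covNs addr0.
have covsY : cov P (s k) Yf = Num.conj (b k) by rewrite cov_J // covYs.
set V := \sum_j sqmod (b j) + sigma2 * complex.Re G.
set u := Num.sqrt (Pw k) * dd.
have VE : \sum_j b j * Num.conj (b j) + real_complex R sigma2 * G = real_complex R V.
  apply: complexP.
    rewrite ReD Re_sum ReM ReC ImC mul0r subr0 ReC /V; congr (_ + _).
    by apply: eq_bigr => j _; rewrite ReJM.
  rewrite ImD Im_sum ImM ReC ImC ImG mulr0 mul0r addr0 ImC big1 ?add0r // => j _.
  by rewrite ImJM.
have bkE : b k = real_complex R u by rewrite /b R2 Dreal conj_realC -rmorphM.
have mseE : forall beta, mse beta = ((complex.Re beta ^+ 2 + complex.Im beta ^+ 2) * V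
                          - 2 * complex.Re beta * u + 1)%:E.
  move=> beta; rewrite /mse.
  have -> : (fun t => sqmod (beta * yhat t - s k t)) =
      fun t => sqmod ((fun t => beta * Yf t + (-1) * s k t) t).
    by apply/funext => t; rewrite hY mulN1r.
  have hbY : cL2g P setT (fun t => beta * Yf t) by apply: cL2g_Z.
  have hms : cL2g P setT (fun t => (-1) * s k t) by apply: cL2g_Z.
  have hZ : cL2g P setT (fun t => beta * Yf t + (-1) * s k t) by apply: cL2g_D.
  rewrite expect_sqmod // cov_Dl // cov_Zl // cov_Zl // !cov_Dr // !cov_Zr //.
  by rewrite covYY covYs covsY covss eqxx VE bkE quadE.
have Vpos : 0 < V by rewrite /V Vsum mulr_gt0 // addr_gt0 // mulr_gt0.
have bsE : beta_star = real_complex R (u / V).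
  rewrite /beta_star -/D Dreal -!rmorphM -rmorphD -fmorphV -rmorphM.
  congr (real_complex R _); rewrite /V Vsum /u.
  have h1 : dd != 0 by rewrite gt_eqF.
  have h2 : Pw k * dd + sigma2 != 0 by rewrite gt_eqF // addr_gt0 // mulr_gt0.
  by field; rewrite h1 h2.
by move=> beta; rewrite bsE; exact: (quad_min Vpos mseE).
Qed.
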